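(* Let $a$ be a positive integer and for $m\in\mathbb{N}$ let $A_m=\{n\in\mathbb{N}:n<F_m^{1/a}\}$. Then for every $\beta\in[0,1]$, $$\frac{\#\{n\in A_m:\{\mathfrak F^{-1}(n^a)\}\le\beta\}}{\#A_m}=\frac{\phi^{\beta/a}-1}{\phi^{1/a}-1}+O(m\phi^{-m/a})\quad(m\to\infty).$$
   Context: $F$: $F_1=1,F_2=2,F_{n+2}=F_{n+1}+F_n$; $\phi$ is the golden ratio; $\mathfrak F(x)=\frac{\phi}{\sqrt5}(\phi^x+\phi^{-x}\cos(\pi x)\phi^{-2})$, which is increasing on $[1,\infty)$ with $\mathfrak F(n)=F_n$, and $\mathfrak F^{-1}$ is its inverse on $[1,\infty)$; $\{y\}$ is the fractional part of $y$. *)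

(* Defs.v *)
From Stdlib Require Import Reals Lra Lia List ClassicalEpsilon.
Open Scope R_scope.

(* Fibonacci with F_1 = 1, F_2 = 2, F_{n+2} = F_{n+1} + F_n (and F_0 = 1). *)
Fixpoint fib (n : nat) : nat :=
  match n with
  | O => 1%nat
  | S O => 1%nat
  | S (S k as k1) => (fib k1 + fib k)%nat
  end.

Definition phi : R := (1 + sqrt 5) / 2.

Definition FF (x : R) : R :=
  phi / sqrt 5 * (Rpower phi x + Rpower phi (- x) * cos (PI * x) * Rpower phi (-2)).

Definition FFinv (y : R) : R :=
  epsilon (inhabits 1) (fun x => 1 <= x /\ FF x = y).

(* fractional part {y} = y - floor y  (Int_part = floor) *)
Definition frac (y : R) : R := y - IZR (Int_part y).

Definition inA (a m n : nat) : bool :=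
  if Rlt_dec (INR n) (Rpower (INR (fib m)) (1 / INR a)) then true else false.

(* Every element of A_m is <= F_m (as F_m >= 1, a >= 1), so we enumerate 1..F_m. *)
Definition cardA (a m : nat) : nat :=
  length (filter (inA a m) (seq 1 (fib m))).

Definition cardA_beta (a m : nat) (beta : R) : nat :=
  length (filter (fun n => inA a m n &&
      (if Rle_dec (frac (FFinv (INR n ^ a))) beta then true else false))%bool
    (seq 1 (fib m))).

(* Main.v *)
Require Import Defs.
From Stdlib Require Import Reals Lra Lia List ClassicalEpsilon.
From Coquelicot Require Import Coquelicot.
Open Scope R_scope.

Lemma s5_sq : sqrt 5 * sqrt 5 = 5.
Proof. apply sqrt_sqrt; lra. Qed.

Lemma s5_bounds : 2 < sqrt 5 < 3.
Proof.
  pose proof s5_sq. pose proof (sqrt_pos 5). nra.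
Qed.

Lemma phi_sq : phi * phi = phi + 1.
Proof. unfold phi. pose proof s5_sq. nra. Qed.

Lemma phi_bounds : 1.6 < phi < 1.7.
Proof.
  unfold phi. pose proof s5_sq. pose proof (sqrt_pos 5). split; nra.
Qed.

Lemma phi_pos : 0 < phi.
Proof. pose proof phi_bounds; lra. Qed.

Lemma cos_PI_nat k : cos (PI * INR k) = (-1) ^ k.
Proof.
  induction k.
  - simpl. rewrite Rmult_0_r, cos_0. reflexivity.
  - rewrite S_INR. replace (PI * (INR k + 1)) with (PI * INR k + PI) by ring.
    rewrite neg_cos, IHk. simpl. ring.
Qed.

Lemma FF_nat_form k :
  FF (INR k) = phi / sqrt 5 * (phi ^ k + (-1) ^ k / (phi ^ k * (phi * phi))).
Proof.
  unfold FF. rewrite Rpower_pow by exact phi_pos.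
  rewrite Rpower_Ropp, Rpower_pow by exact phi_pos.
  replace (-2) with (- INR 2) by (simpl; ring).
  rewrite Rpower_Ropp, Rpower_pow by exact phi_pos.
  rewrite cos_PI_nat. simpl.
  pose proof phi_pos. pose proof s5_bounds. pose proof (pow_lt phi k phi_pos).
  field. repeat split; lra.
Qed.

Lemma FF_nat k : FF (INR k) = INR (fib k).
Proof.
  assert (H : forall k, FF (INR k) = INR (fib k) /\ FF (INR (S k)) = INR (fib (S k))).
  { induction k0.
    - rewrite !FF_nat_form. simpl. pose proof s5_sq. pose proof s5_bounds.
      pose proof phi_sq. pose proof phi_pos.
      unfold phi. set (s := sqrt 5) in *.
      assert (E2 : s^2 = 5) by (simpl; lra).
      assert (E3 : s^3 = 5*s) by (simpl; nra).
      assert (E4 : s^4 = 25) by (simpl; nra).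
      split.
      + field_simplify; [|lra]. rewrite E2. field. lra.
      + field_simplify; [|lra]. rewrite E2, E3, E4. field. lra.
    - destruct IHk0 as [H1 H2]. split; [exact H2|].
      change (fib (S (S k0))) with (fib (S k0) + fib k0)%nat.
      rewrite plus_INR, <- H1, <- H2, !FF_nat_form.
      pose proof phi_sq. pose proof phi_pos. pose proof s5_bounds.
      pose proof (pow_lt phi k0 phi_pos).
      simpl. set (x := phi ^ k0) in *. set (e := (-1) ^ k0).
      match goal with |- ?L = ?R =>
        replace L with (R + phi / sqrt 5 * (phi * phi - phi - 1) *
           (x - e / (x * (phi * phi) * (phi * phi)))) by (field; repeat split; lra) end.
      replace (phi * phi - phi - 1) with 0 by lra. ring. }
  apply H.
Qed.

Definition cc := phi / sqrt 5.

Lemma cc_bounds : 0.7 < cc < 0.75 /\ 1 < cc * phi.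
Proof.
  unfold cc, phi. pose proof s5_sq. pose proof s5_bounds.
  set (s := sqrt 5) in *.
  assert (2.2 < s < 2.25) by nra.
  repeat split.
  - apply Rmult_lt_reg_r with s; [lra|]. field_simplify; lra.
  - apply Rmult_lt_reg_r with s; [lra|]. field_simplify; lra.
  - apply Rmult_lt_reg_r with s; [lra|]. field_simplify; [|lra]. nra.
Qed.

Lemma Rp_pos y : 0 < Rpower phi y.
Proof. unfold Rpower. apply exp_pos. Qed.

Lemma Rp_le1 y : 0 <= y -> Rpower phi (- y) <= 1.
Proof.
  intros. rewrite <- (Rpower_O phi phi_pos). apply Rle_Rpower.
  pose proof phi_bounds; lra. lra.
Qed.

Lemma FF_split t : FF t - cc * Rpower phi t =
  cc * (Rpower phi (- t) * cos (PI * t) * Rpower phi (-2)).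
Proof. unfold FF, cc. ring. Qed.

Lemma FF_approx t : 0 <= t -> Rabs (FF t - cc * Rpower phi t) <= 1.
Proof.
  intros Ht. rewrite FF_split.
  pose proof (Rp_le1 t Ht).
  assert (Rpower phi (-2) <= 1) by (replace (-2) with (-(2)) by ring; apply Rp_le1; lra).
  pose proof (Rp_pos (-t)). pose proof (Rp_pos (-2)).
  pose proof (COS_bound (PI * t)). pose proof cc_bounds.
  rewrite !Rabs_mult. rewrite (Rabs_right cc) by lra.
  rewrite (Rabs_right (Rpower phi (-t))) by lra.
  rewrite (Rabs_right (Rpower phi (-2))) by lra.
  assert (Rabs (cos (PI * t)) <= 1) by (apply Rabs_le; lra).
  pose proof (Rabs_pos (cos (PI * t))).
  apply Rle_trans with (cc * 1). 2: lra.
  apply Rmult_le_compat_l; [lra|].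
  assert (Rpower phi (- t) * Rabs (cos (PI * t)) <= 1) by nra.
  assert (0 <= Rpower phi (- t) * Rabs (cos (PI * t))) by nra.
  nra.
Qed.

Lemma Rp2 : Rpower phi 2 = phi * phi.
Proof. replace 2 with (INR 2) by (simpl; ring). rewrite Rpower_pow by exact phi_pos. simpl; ring. Qed.

Lemma FF_small x : 1 <= x <= 2 -> FF x < 3.
Proof.
  intros Hx. pose proof (FF_approx x ltac:(lra)).
  apply Rabs_le_between in H.
  assert (Rpower phi x <= Rpower phi 2) by (apply Rle_Rpower; pose proof phi_bounds; lra).
  rewrite Rp2 in H0.
  assert (cc * (phi * phi) < 2).
  { unfold cc. rewrite phi_sq. unfold phi. pose proof s5_bounds.
    apply Rmult_lt_reg_r with (sqrt 5); [lra|]. pose proof s5_sq. field_simplify; nra. }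
  pose proof cc_bounds. nra.
Qed.

Lemma ln_phi_ge : 1/3 <= ln phi.
Proof.
  destruct (Rle_lt_dec (1/3) (ln phi)) as [h|h]; [exact h|exfalso].
  assert (phi < exp (1/3)).
  { rewrite <- (exp_ln phi phi_pos). apply exp_increasing. exact h. }
  assert (exp (1/3) * exp (1/3) * exp (1/3) = exp 1).
  { rewrite <- !exp_plus. f_equal. lra. }
  pose proof exp_le_3. pose proof phi_bounds.
  pose proof (exp_pos (1/3)). nra.
Qed.

Lemma exp_le_exp x y : x <= y -> exp x <= exp y.
Proof. intros [h|h]; [left; apply exp_increasing; exact h|rewrite h; lra]. Qed.

Definition ll := ln phi.
Definition E2 := Rpower phi (-2).

Definition dFF x := cc * (ll * exp (x * ll) +
   E2 * (- ll * exp (- x * ll) * cos (PI * x) - PI * exp (- x * ll) * sin (PI * x))).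

Lemma FF_exp x : FF x = cc * (exp (x * ll) + exp (- x * ll) * cos (PI * x) * E2).
Proof. unfold FF, cc, ll, E2. unfold Rpower at 1 2. reflexivity. Qed.

Lemma FF_derive x : is_derive FF x (dFF x).
Proof.
  apply is_derive_ext with (fun x => cc * (exp (x * ll) + exp (- x * ll) * cos (PI * x) * E2)).
  { intros; symmetry; apply FF_exp. }
  auto_derive; [auto|]. unfold dFF. ring.
Qed.

Lemma FF_cont x : continuity_pt FF x.
Proof.
  apply continuity_pt_filterlim. apply (@ex_derive_continuous R_AbsRing R_NormedModule FF x).
  exists (dFF x). apply FF_derive.
Qed.

Lemma FF_continuity : continuity FF.
Proof. intros x. apply FF_cont. Qed.

Lemma dFF_pos x : 2 <= x -> 0 < dFF x.
Proof.
  intros Hx. unfold dFF.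
  pose proof ln_phi_ge as Hl. fold ll in Hl.
  pose proof cc_bounds. pose proof phi_bounds.
  assert (HA : phi * phi <= exp (x * ll)).
  { rewrite <- Rp2. unfold Rpower. apply exp_le_exp. fold ll. nra. }
  assert (HB : exp (- x * ll) <= E2).
  { unfold E2, Rpower. apply exp_le_exp. fold ll. nra. }
  assert (HE : E2 * (phi * phi) = 1).
  { unfold E2. rewrite <- Rp2, <- Rpower_plus. replace (-2 + 2) with 0 by ring.
    apply Rpower_O, phi_pos. }
  assert (HBp : 0 < exp (- x * ll)) by apply exp_pos.
  assert (HEp : 0 < E2) by (unfold E2; apply Rp_pos).
  pose proof (COS_bound (PI * x)). pose proof (SIN_bound (PI * x)).
  pose proof PI_4. pose proof PI_RGT_0.
  assert (0 <= ll * exp (- x * ll)) by nra.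
  assert (0 <= PI * exp (- x * ll)) by nra.
  assert (Hs : - ll * exp (- x * ll) * cos (PI * x) - PI * exp (- x * ll) * sin (PI * x)
            >= - (ll + PI) * exp (- x * ll)) by nra.
  assert (E2 <= 1 / 2.56).
  { apply Rmult_le_reg_r with (phi * phi). nra. rewrite HE. nra. }
  assert (E2 * exp (- x * ll) <= 1 / 2.56 * (1 / 2.56)) by nra.
  assert (Hp2 : 2.56 < phi*phi) by nra.
  assert (2.56 * ll <= ll * exp (x * ll)).
  { assert (0 <= ll * (exp (x * ll) - 2.56)) by (apply Rmult_le_pos; lra). lra. }
  assert (E2 * (- ll * exp (- x * ll) * cos (PI * x) - PI * exp (- x * ll) * sin (PI * x))
          >= - (ll + PI) * (E2 * exp (- x * ll))) by nra.
  apply Rmult_lt_0_compat; [lra|]. nra.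
Qed.

Lemma FF_strict x y : 2 <= x -> x < y -> FF x < FF y.
Proof.
  intros Hx Hxy.
  destruct (MVT_gen FF x y dFF) as [c [Hc Heq]].
  - intros t _. apply FF_derive.
  - intros t _. apply FF_cont.
  - rewrite Rmin_left in Hc by lra. rewrite Rmax_right in Hc by lra.
    pose proof (dFF_pos c ltac:(lra)). nra.
Qed.

Lemma FF_mono x y : 2 <= x -> x <= y -> FF x <= FF y.
Proof.
  intros Hx Hxy. destruct (Req_dec x y) as [->|Hn]; [lra|].
  left; apply FF_strict; lra.
Qed.

Lemma fib_S n : (fib n <= fib (S n))%nat.
Proof. destruct n; simpl; lia. Qed.

Lemma fib_mono n m : (n <= m)%nat -> (fib n <= fib m)%nat.
Proof.
  induction 1; [lia|]. pose proof (fib_S m). lia.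
Qed.

Lemma fib_ge3 K : (3 <= K)%nat -> 3 <= INR (fib K).
Proof.
  intros HK. pose proof (fib_mono 3 K HK). apply le_INR in H.
  simpl in H. lra.
Qed.

Lemma INR_S_eq K : INR (S K) = INR K + 1.
Proof. apply S_INR. Qed.

Lemma FFinv_char K y beta : (3 <= K)%nat -> 0 <= beta <= 1 ->
  INR (fib K) <= y < INR (fib (S K)) ->
  (frac (FFinv y) <= beta <-> y <= FF (INR K + beta)).
Proof.
  intros HK Hb [Hy1 Hy2].
  pose proof (fib_ge3 K HK) as H3.
  assert (HK2 : 2 <= INR K) by (apply le_INR in HK; simpl in HK; lra).
  assert (Hex : exists z, 1 <= z /\ FF z = y).
  { destruct (IVT_cor (fun t => FF t - y) (INR K) (INR K + 1)) as [z [Hz1 Hz2]].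
    - intros t. change (continuity_pt (FF - fct_cte y)%F t).
      apply continuity_pt_minus; [apply FF_cont|apply continuity_pt_const].
      intros a b; reflexivity.
    - lra.
    - rewrite <- INR_S_eq, !FF_nat.
      assert (INR (fib K) - y <= 0) by lra.
      assert (0 <= INR (fib (S K)) - y) by lra. nra.
    - exists z. split; lra. }
  pose proof (epsilon_spec (inhabits 1) (fun x => 1 <= x /\ FF x = y) Hex) as [Hx1 Hx2].
  fold (FFinv y) in Hx1, Hx2. set (x := FFinv y) in *.
  assert (Hx2' : 2 <= x).
  { destruct (Rle_lt_dec 2 x) as [h|h]; [exact h|].
    pose proof (FF_small x ltac:(lra)). lra. }
  assert (HxK : INR K <= x).
  { destruct (Rle_lt_dec (INR K) x) as [h|h]; [exact h|].
    pose proof (FF_strict x (INR K) Hx2' h). rewrite FF_nat in H. lra. }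
  assert (HxK1 : x < INR K + 1).
  { destruct (Rle_lt_dec (INR K + 1) x) as [h|h]; [|exact h].
    pose proof (FF_mono (INR K + 1) x ltac:(lra) h). rewrite <- INR_S_eq, FF_nat in H. lra. }
  assert (Hint : Int_part x = Z.of_nat K).
  { symmetry. apply Int_part_spec. rewrite <- INR_IZR_INZ. lra. }
  unfold frac. rewrite Hint, <- INR_IZR_INZ.
  split; intros h.
  - rewrite <- Hx2. apply FF_mono; lra.
  - destruct (Rle_lt_dec (x - INR K) beta) as [h'|h']; [exact h'|].
    pose proof (FF_strict (INR K + beta) x ltac:(lra) ltac:(lra)). lra.
Qed.

Definition cnt (P : nat -> bool) (N : nat) : nat := length (filter P (seq 1 N)).

Lemma cnt_S P N : cnt P (S N) = (cnt P N + Nat.b2n (P (S N)))%nat.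
Proof.
  unfold cnt. rewrite seq_S, filter_app, length_app. replace (1 + N)%nat with (S N) by lia.
  simpl. destruct (P (S N)); reflexivity.
Qed.

Lemma cnt_0 P : cnt P 0 = 0%nat.
Proof. reflexivity. Qed.

Lemma cnt_le P N : (cnt P N <= N)%nat.
Proof.
  induction N; [rewrite cnt_0; lia|]. rewrite cnt_S. destruct (P (S N)); cbn [Nat.b2n]. all: lia.
Qed.

Lemma cnt_mono P P' N : (forall n, P n = true -> P' n = true) -> (cnt P N <= cnt P' N)%nat.
Proof.
  intros H. induction N; [rewrite cnt_0; lia|]. rewrite !cnt_S.
  destruct (P (S N)) eqn:E.
  - rewrite (H _ E). cbn [Nat.b2n]. lia.
  - cbn [Nat.b2n]. lia.
Qed.

Lemma cnt_pw P1 P2 P3 P4 N :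
  (forall n, (1 <= n <= N)%nat ->
     (Nat.b2n (P1 n) + Nat.b2n (P2 n) = Nat.b2n (P3 n) + Nat.b2n (P4 n))%nat) ->
  (cnt P1 N + cnt P2 N = cnt P3 N + cnt P4 N)%nat.
Proof.
  induction N; intros H; [reflexivity|].
  rewrite !cnt_S.
  assert (IH : (cnt P1 N + cnt P2 N = cnt P3 N + cnt P4 N)%nat)
    by (apply IHN; intros; apply H; lia).
  pose proof (H (S N) ltac:(lia)). lia.
Qed.

Lemma cnt_prefix_gen P q N :
  (forall n, (1 <= n <= N)%nat -> (INR n < q -> P n = true) /\ (P n = true -> INR n <= q)) ->
  0 <= q ->
  INR (cnt P N) <= q /\ (forall t, t <= INR N -> t <= q - 1 -> t <= INR (cnt P N)).
Proof.
  induction N; intros H Hq.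
  - rewrite cnt_0. simpl. split; [lra|]. intros; lra.
  - destruct IHN as [IH1 IH2]; [intros; apply H; lia|exact Hq|].
    rewrite cnt_S, plus_INR. rewrite S_INR.
    pose proof (H (S N) ltac:(lia)) as [HA HB]. rewrite S_INR in HA, HB.
    pose proof (le_INR _ _ (cnt_le P N)).
    destruct (P (S N)) eqn:E; simpl Nat.b2n; simpl INR.
    + specialize (HB eq_refl). split; [lra|].
      intros t Ht1 Ht2. pose proof (IH2 (t - 1) ltac:(lra) ltac:(lra)). lra.
    + assert (~ INR N + 1 < q) by (intro h; specialize (HA h); discriminate).
      split; [lra|]. intros t Ht1 Ht2. pose proof (IH2 t ltac:(lra) ltac:(lra)). lra.
Qed.

Lemma cnt_prefix P q N :
  (forall n, (1 <= n <= N)%nat -> (INR n < q -> P n = true) /\ (P n = true -> INR n <= q)) ->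
  0 <= q -> q <= INR N ->
  q - 1 <= INR (cnt P N) <= q.
Proof.
  intros H Hq HN. destruct (cnt_prefix_gen P q N H Hq) as [A B].
  split; [apply B; lra|exact A].
Qed.

Definition Lt (X : R) (n : nat) : bool := if Rlt_dec (INR n) X then true else false.
Definition Le (X : R) (n : nat) : bool := if Rle_dec (INR n) X then true else false.

Section PW.
Variable a : nat.
Hypothesis Ha : (1 <= a)%nat.

Definition pw (Y : R) := Rpower Y (1 / INR a).

Lemma r_pos : 0 < 1 / INR a.
Proof. apply le_INR in Ha. simpl in Ha. apply Rdiv_lt_0_compat; lra. Qed.

Lemma r_le1 : 1 / INR a <= 1.
Proof.
  apply le_INR in Ha. simpl in Ha.
  unfold Rdiv. rewrite Rmult_1_l. rewrite <- Rinv_1. apply Rinv_le_contravar; lra.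
Qed.

Lemma pw_pow n : (1 <= n)%nat -> pw (INR n ^ a) = INR n.
Proof.
  intros Hn. apply le_INR in Hn. simpl in Hn.
  unfold pw. rewrite <- Rpower_pow by lra. rewrite Rpower_mult.
  replace (INR a * (1 / INR a)) with 1. apply Rpower_1; lra.
  field. apply le_INR in Ha. simpl in Ha. lra.
Qed.

Lemma pw_le Y Z : 0 < Y <= Z -> pw Y <= pw Z.
Proof. intros. unfold pw. apply Rle_Rpower_l; [left; apply r_pos|exact H]. Qed.

Lemma pw_lt Y Z : 0 < Y < Z -> pw Y < pw Z.
Proof. intros. unfold pw. apply Rlt_Rpower_l; [apply r_pos|exact H]. Qed.

Lemma pw_pos Y : 0 < pw Y.
Proof. unfold pw, Rpower. apply exp_pos. Qed.

Lemma pow_pos_n n : (1 <= n)%nat -> 0 < INR n ^ a.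
Proof. intros Hn. apply pow_lt. apply le_INR in Hn. simpl in Hn. lra. Qed.

Lemma pow_le_iff n Y : (1 <= n)%nat -> 0 < Y -> (INR n ^ a <= Y <-> INR n <= pw Y).
Proof.
  intros Hn HY. pose proof (pow_pos_n n Hn). split; intros h.
  - rewrite <- (pw_pow n Hn). apply pw_le. lra.
  - destruct (Rle_lt_dec (INR n ^ a) Y) as [h'|h']; [exact h'|].
    pose proof (pw_lt Y (INR n ^ a) ltac:(lra)). rewrite pw_pow in H0 by exact Hn. lra.
Qed.

Lemma pow_lt_iff n Y : (1 <= n)%nat -> 0 < Y -> (INR n ^ a < Y <-> INR n < pw Y).
Proof.
  intros Hn HY. pose proof (pow_pos_n n Hn). split; intros h.
  - rewrite <- (pw_pow n Hn). apply pw_lt. lra.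
  - destruct (Rlt_le_dec (INR n ^ a) Y) as [h'|h']; [exact h'|].
    pose proof (pw_le Y (INR n ^ a) ltac:(lra)). rewrite pw_pow in H0 by exact Hn. lra.
Qed.

Lemma pw_le_self Y : 1 <= Y -> pw Y <= Y.
Proof.
  intros. unfold pw. rewrite <- (Rpower_1 Y) at 2 by lra.
  apply Rle_Rpower; [lra|apply r_le1].
Qed.

Lemma pw_ge1 Y : 1 <= Y -> 1 <= pw Y.
Proof.
  intros. unfold pw. rewrite <- (Rpower_O Y) at 1 by lra.
  apply Rle_Rpower; [lra|left; apply r_pos].
Qed.

Lemma pw_lip Y Z : 1 <= Y -> 1 <= Z -> Rabs (pw Y - pw Z) <= Rabs (Y - Z).
Proof.
  assert (main : forall Y Z, 1 <= Z <= Y -> pw Y - pw Z <= Y - Z).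
  { intros Y0 Z0 [h1 h2]. set (d := Y0 / Z0).
    assert (Hd : 1 <= d) by (unfold d; apply Rmult_le_reg_r with Z0; [lra|];
       unfold Rdiv; rewrite Rmult_assoc, Rinv_l by lra; lra).
    assert (HY : Y0 = Z0 * d) by (unfold d; field; lra).
    assert (pw Y0 = pw Z0 * pw d) by (rewrite HY; unfold pw; symmetry; apply Rpower_mult_distr; lra).
    pose proof (pw_le_self d Hd). pose proof (pw_le_self Z0 ltac:(lra)).
    pose proof (pw_ge1 d Hd). pose proof (pw_ge1 Z0 ltac:(lra)).
    rewrite H, HY. nra. }
  intros HY HZ.
  destruct (Rle_lt_dec Z Y) as [h|h].
  - pose proof (main Y Z ltac:(lra)). pose proof (pw_le Z Y ltac:(lra)).
    rewrite !Rabs_right by lra. lra.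
  - pose proof (main Z Y ltac:(lra)). pose proof (pw_le Y Z ltac:(lra)).
    rewrite Rabs_left1 by lra. rewrite Rabs_left1 by lra. lra.
Qed.

End PW.

Lemma bernoulli_pow q m : 1 <= q -> 1 + INR m * (q - 1) <= q ^ m.
Proof.
  intros Hq. induction m.
  - simpl. lra.
  - rewrite S_INR. simpl. pose proof (pos_INR m). assert (0 <= INR m * (q-1) * (q-1)) by (apply Rmult_le_pos; [apply Rmult_le_pos|]; lra). nra.
Qed.

Lemma ccphi_ge1 t : 1 <= t -> 1 <= cc * Rpower phi t.
Proof.
  intros Ht. pose proof cc_bounds as [_ H]. pose proof phi_bounds.
  assert (phi <= Rpower phi t).
  { rewrite <- (Rpower_1 phi) at 1 by lra. apply Rle_Rpower; lra. }
  pose proof cc_bounds. nra.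
Qed.

Section Main.
Variable a : nat.
Hypothesis Ha : (1 <= a)%nat.
Variable beta : R.
Hypothesis Hb : 0 <= beta <= 1.

Let r := 1 / INR a.
Definition qq := Rpower phi (1 / INR a).
Definition GG := Rpower cc (1 / INR a).
Definition LL := (Rpower phi (beta / INR a) - 1) / (Rpower phi (1 / INR a) - 1).

Definition uu K := pw a (INR (fib K)).
Definition ww K := pw a (FF (INR K + beta)).
Definition BB (n : nat) : bool :=
  if Rle_dec (frac (FFinv (INR n ^ a))) beta then true else false.

Lemma qq_gt1 : 1 < qq.
Proof.
  unfold qq. rewrite <- (Rpower_O phi) at 1 by apply phi_pos.
  apply Rpower_lt; [pose proof phi_bounds; lra|apply r_pos; exact Ha].
Qed.

Lemma GG_pos : 0 < GG.
Proof. unfold GG, Rpower. apply exp_pos. Qed.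

Lemma v_eq t : pw a (cc * Rpower phi t) = GG * Rpower qq t.
Proof.
  unfold pw, GG, qq. pose proof cc_bounds.
  rewrite <- Rpower_mult_distr by (try lra; apply Rp_pos).
  rewrite !Rpower_mult. f_equal. f_equal. ring.
Qed.

Lemma qq_beta : Rpower phi (beta / INR a) = Rpower qq beta.
Proof. unfold qq. rewrite Rpower_mult. f_equal. unfold Rdiv. ring. Qed.

Lemma LL_eq : LL * (qq - 1) = Rpower qq beta - 1.
Proof.
  unfold LL. rewrite qq_beta. fold qq. pose proof qq_gt1. field. lra.
Qed.

Lemma LL_nonneg : 0 <= LL.
Proof.
  unfold LL. rewrite qq_beta. fold qq. pose proof qq_gt1.
  assert (1 <= Rpower qq beta).
  { rewrite <- (Rpower_O qq) at 1 by lra. apply Rle_Rpower; lra. }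
  apply Rmult_le_pos; [lra|]. left; apply Rinv_0_lt_compat; lra.
Qed.

Lemma approx_gen Y t : 1 <= t -> 1 <= Y -> Rabs (Y - cc * Rpower phi t) <= 1 ->
  Rabs (pw a Y - GG * Rpower qq t) <= 1.
Proof.
  intros Ht HY H. rewrite <- v_eq.
  eapply Rle_trans; [apply pw_lip; auto|]. apply ccphi_ge1; lra. exact H.
Qed.

Lemma INRK3 K : (3 <= K)%nat -> 3 <= INR K.
Proof. intros. apply le_INR in H. simpl in H. lra. Qed.

Lemma uu_approx K : (3 <= K)%nat -> Rabs (uu K - GG * Rpower qq (INR K)) <= 1.
Proof.
  intros HK. pose proof (INRK3 K HK). unfold uu. apply approx_gen; [lra| |].
  - pose proof (fib_ge3 K HK); lra.
  - rewrite <- FF_nat. apply FF_approx. lra.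
Qed.

Lemma FFb_bounds K : (3 <= K)%nat ->
  INR (fib K) <= FF (INR K + beta) <= INR (fib (S K)).
Proof.
  intros HK. pose proof (INRK3 K HK). rewrite <- !FF_nat. rewrite S_INR.
  split; apply FF_mono; lra.
Qed.

Lemma ww_approx K : (3 <= K)%nat -> Rabs (ww K - GG * Rpower qq (INR K + beta)) <= 1.
Proof.
  intros HK. pose proof (INRK3 K HK). unfold ww. apply approx_gen; [lra| |].
  - pose proof (fib_ge3 K HK). pose proof (FFb_bounds K HK). lra.
  - apply FF_approx. lra.
Qed.

Lemma uw_order K : (3 <= K)%nat -> uu K <= ww K <= uu (S K).
Proof.
  intros HK. pose proof (fib_ge3 K HK). pose proof (FFb_bounds K HK).
  unfold uu, ww. split; apply pw_le; auto; lra.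
Qed.

Lemma uu_mono K m : (K <= m)%nat -> uu K <= uu m.
Proof.
  intros H. unfold uu. apply pw_le; auto. pose proof (fib_mono _ _ H).
  apply le_INR in H0. pose proof (pos_INR (fib K)).
  assert (1 <= INR (fib K)). { clear. induction K. simpl; lra. 
    pose proof (fib_S K). apply le_INR in H. lra. }
  lra.
Qed.

Lemma fib_ge1 K : 1 <= INR (fib K).
Proof. induction K. simpl; lra. pose proof (fib_S K). apply le_INR in H. lra. Qed.

Lemma uu_le_N K m : (K <= m)%nat -> uu K <= INR (fib m).
Proof.
  intros H. eapply Rle_trans; [apply uu_mono; exact H|].
  unfold uu. apply pw_le_self; auto. apply fib_ge1.
Qed.

Definition gg m K := cnt (fun n => Lt (uu K) n && BB n)%bool (fib m).
Definition QQ K n := (Lt (uu (S K)) n && Le (ww K) n)%bool.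

Lemma step_eq m K : (3 <= K)%nat -> (S K <= m)%nat ->
  (gg m (S K) + cnt (Lt (uu K)) (fib m) = gg m K + cnt (QQ K) (fib m))%nat.
Proof.
  intros HK HKm. unfold gg. apply cnt_pw. intros n Hn.
  pose proof (uw_order K HK) as [O1 O2].
  pose proof (fib_ge3 K HK) as F3.
  assert (Hn1 : (1 <= n)%nat) by lia.
  unfold QQ, Lt, Le.
  destruct (Rlt_dec (INR n) (uu K)) as [h1|h1].
  - destruct (Rlt_dec (INR n) (uu (S K))) as [h2|h2]; [|lra].
    destruct (Rle_dec (INR n) (ww K)) as [h3|h3]; [|lra].
    destruct (BB n); simpl; lia.
  - destruct (Rlt_dec (INR n) (uu (S K))) as [h2|h2].
    + destruct (Rle_dec (INR n) (ww K)) as [h3|h3]; simpl.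
      * assert (BB n = true); [|rewrite H; simpl; lia].
        unfold BB. destruct (Rle_dec _ _) as [h|h]; [reflexivity|exfalso; apply h].
        apply (FFinv_char K); auto.
        -- split.
           ++ destruct (Rle_lt_dec (INR (fib K)) (INR n ^ a)) as [h4|h4]; [exact h4|].
              apply (pow_lt_iff a Ha n) in h4; [|exact Hn1|lra]. contradiction.
           ++ apply (pow_lt_iff a Ha n); [exact Hn1| |exact h2].
              pose proof (fib_S K). apply le_INR in H. lra.
        -- apply (pow_le_iff a Ha n); [exact Hn1| |exact h3]. 
           pose proof (FFb_bounds K HK). lra.
      * assert (BB n = false); [|rewrite H; simpl; lia].
        unfold BB. destruct (Rle_dec _ _) as [h|h]; [exfalso; apply h3|reflexivity].
        apply (pow_le_iff a Ha n); [exact Hn1| pose proof (FFb_bounds K HK); lra|].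
        apply (FFinv_char K); auto. split.
           ++ destruct (Rle_lt_dec (INR (fib K)) (INR n ^ a)) as [h4|h4]; [exact h4|].
              apply (pow_lt_iff a Ha n) in h4; [|exact Hn1|lra]. contradiction.
           ++ apply (pow_lt_iff a Ha n); [exact Hn1| |exact h2].
              pose proof (fib_S K). apply le_INR in H. lra.
    + simpl. lia.
Qed.

Lemma Lt_prefix X N : forall n, (1 <= n <= N)%nat ->
  (INR n < X -> Lt X n = true) /\ (Lt X n = true -> INR n <= X).
Proof.
  intros n _. unfold Lt. destruct (Rlt_dec (INR n) X); split; intros; try lra; try reflexivity; discriminate.
Qed.

Lemma c1_bounds m K : (K <= m)%nat ->
  uu K - 1 <= INR (cnt (Lt (uu K)) (fib m)) <= uu K.
Proof.
  intros H. apply cnt_prefix. apply Lt_prefix. left; apply pw_pos. apply uu_le_N; exact H.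
Qed.

Lemma c2_bounds m K : (3 <= K)%nat -> (S K <= m)%nat ->
  ww K - 1 <= INR (cnt (QQ K) (fib m)) <= ww K.
Proof.
  intros HK H. pose proof (uw_order K HK) as [O1 O2].
  pose proof (uu_le_N (S K) m H).
  apply cnt_prefix.
  - intros n _. unfold QQ, Lt, Le.
    destruct (Rlt_dec (INR n) (uu (S K))); destruct (Rle_dec (INR n) (ww K)); simpl;
      split; intros; try lra; try reflexivity; try discriminate.
  - left; apply pw_pos.
  - lra.
Qed.

Lemma step_bound m K : (3 <= K)%nat -> (S K <= m)%nat ->
  Rabs ((INR (gg m (S K)) - LL * GG * Rpower qq (INR (S K)))
        - (INR (gg m K) - LL * GG * Rpower qq (INR K))) <= 3.
Proof.
  intros HK H.
  pose proof (step_eq m K HK H) as E. apply (f_equal INR) in E. rewrite !plus_INR in E.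
  pose proof (c1_bounds m K ltac:(lia)). pose proof (c2_bounds m K HK H).
  pose proof (uu_approx K HK) as A1. pose proof (ww_approx K HK) as A2.
  apply Rabs_le_between in A1. apply Rabs_le_between in A2.
  rewrite Rpower_plus in A2.
  assert (I : LL * GG * Rpower qq (INR (S K)) - LL * GG * Rpower qq (INR K)
     = GG * (Rpower qq (INR K) * Rpower qq beta) - GG * Rpower qq (INR K)).
  { rewrite S_INR, Rpower_plus, Rpower_1 by (pose proof qq_gt1; lra).
    transitivity (GG * Rpower qq (INR K) * (LL * (qq - 1))); [ring|].
    rewrite LL_eq. ring. }
  apply Rabs_le. lra.
Qed.

Definition E0 := uu 3 + LL * GG * Rpower qq 3.

Lemma cum m j : (3 + j <= m)%nat ->
  Rabs (INR (gg m (3 + j)) - LL * GG * Rpower qq (INR (3 + j))) <= E0 + 3 * INR j.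
Proof.
  induction j; intros H.
  - simpl INR. replace (1+1+1) with 3 by ring. unfold E0.
    assert (0 <= LL * GG * Rpower qq 3).
    { apply Rmult_le_pos; [apply Rmult_le_pos; [apply LL_nonneg|left; apply GG_pos]|].
      left; unfold Rpower; apply exp_pos. }
    assert (INR (gg m 3) <= uu 3).
    { eapply Rle_trans; [apply le_INR; apply cnt_mono|].
      2: apply (c1_bounds m 3); lia.
      intros n h. apply andb_prop in h. apply h. }
    pose proof (pos_INR (gg m 3)).
    apply Rabs_le. simpl (3 + 0)%nat. lra.
  - specialize (IHj ltac:(lia)).
    pose proof (step_bound m (3 + j) ltac:(lia) ltac:(lia)).
    replace (3 + S j)%nat with (S (3 + j)) by lia.
    rewrite S_INR with (n := j).
    apply Rabs_le_between in IHj. apply Rabs_le_between in H0. apply Rabs_le. lra.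
Qed.

Lemma final_S m : (3 <= m)%nat ->
  Rabs (INR (gg m m) - LL * (GG * Rpower qq (INR m))) <= E0 + 3 * INR m.
Proof.
  intros H. pose proof (cum m (m - 3) ltac:(lia)).
  replace (3 + (m - 3))%nat with m in H0 by lia.
  rewrite minus_INR in H0 by lia. simpl INR in H0.
  rewrite <- Rmult_assoc. lra.
Qed.

Lemma final_T m : (3 <= m)%nat ->
  Rabs (INR (cnt (Lt (uu m)) (fib m)) - GG * Rpower qq (INR m)) <= 2.
Proof.
  intros H. pose proof (c1_bounds m m ltac:(lia)). pose proof (uu_approx m H).
  apply Rabs_le_between in H1. apply Rabs_le. lra.
Qed.

End Main.

Lemma ratio_bound S T L W X : 0 <= L -> 4 <= W ->
  Rabs (S - L * W) <= X -> Rabs (T - W) <= 2 ->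
  Rabs (S / T - L) <= 2 * (X + 2 * L) / W.
Proof.
  intros HL HW H1 H2. apply Rabs_le_between in H1. apply Rabs_le_between in H2.
  assert (HT : W / 2 <= T) by lra.
  replace (S / T - L) with ((S - L * T) / T) by (field; lra).
  unfold Rdiv. rewrite Rabs_mult, Rabs_inv, (Rabs_right T) by lra.
  assert (Rabs (S - L * T) <= X + 2 * L).
  { apply Rabs_le. nra. }
  assert (/ T <= 2 / W).
  { replace (2 / W) with (/ (W / 2)) by (field; lra). apply Rinv_le_contravar; lra. }
  pose proof (Rabs_pos (S - L * T)).
  assert (0 < / T) by (apply Rinv_0_lt_compat; lra).
  apply Rle_trans with ((X + 2 * L) * (2 / W)).
  - apply Rmult_le_compat; lra.
  - right. field. lra.
Qed.

Theorem lemma4p9 (a : nat) (Ha : (1 <= a)%nat) (beta : R) (Hb : 0 <= beta <= 1) :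
  exists C : R, exists M : nat, forall m : nat, (M <= m)%nat ->
    Rabs (INR (cardA_beta a m beta) / INR (cardA a m)
          - (Rpower phi (beta / INR a) - 1) / (Rpower phi (1 / INR a) - 1))
    <= C * INR m * Rpower phi (- INR m / INR a).
Proof.
  pose proof (qq_gt1 a Ha) as Hq. pose proof (GG_pos a) as HG.
  pose proof (LL_nonneg a Ha beta Hb) as HL.
  set (E := E0 a beta).
  assert (HE : 0 <= E).
  { unfold E, E0. pose proof (pw_pos a (INR (fib 3))).
    assert (0 <= LL a beta * GG a * Rpower (qq a) 3).
    { apply Rmult_le_pos; [apply Rmult_le_pos; lra|]. left; unfold Rpower; apply exp_pos. }
    unfold uu. lra. }
  destruct (INR_archimed (GG a * (qq a - 1)) 4) as [n0 Hn0].
  { apply Rmult_lt_0_compat; lra. }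
  exists (2 * (E + 3 + 2 * LL a beta) / GG a), (3 + n0)%nat.
  intros m Hm.
  assert (HW : 4 <= GG a * Rpower (qq a) (INR m)).
  { rewrite Rpower_pow by lra. pose proof (bernoulli_pow (qq a) m ltac:(lra)).
    apply le_INR in Hm. rewrite plus_INR in Hm.
    assert (INR n0 <= INR m) by (simpl in Hm; lra).
    assert (INR n0 * (GG a * (qq a - 1)) <= INR m * (GG a * (qq a - 1))).
    { apply Rmult_le_compat_r; [apply Rmult_le_pos; lra|lra]. }
    nra. }
  pose proof (final_S a Ha beta Hb m ltac:(lia)) as FS.
  pose proof (final_T a Ha m ltac:(lia)) as FT.
  change (cardA_beta a m beta) with (gg a beta m m).
  change (cardA a m) with (cnt (Lt (uu a m)) (fib m)).
  fold (LL a beta).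
  eapply Rle_trans; [apply (ratio_bound _ _ _ _ _ HL HW FS FT)|].
  assert (Hr : Rpower phi (- INR m / INR a) = / Rpower (qq a) (INR m)).
  { unfold qq. rewrite Rpower_mult, <- Rpower_Ropp. f_equal. unfold Rdiv. ring. }
  rewrite Hr.
  set (P := Rpower (qq a) (INR m)) in *.
  assert (HP : 0 < P) by (unfold P, Rpower; apply exp_pos).
  assert (Hm1 : 1 <= INR m) by (apply le_INR in Hm; rewrite plus_INR in Hm; simpl in Hm; pose proof (pos_INR n0); lra).
  fold E.
  replace (2 * (E + 3 * INR m + 2 * LL a beta) / (GG a * P))
    with (2 * (E + 3 * INR m + 2 * LL a beta) / GG a * / P) by (field; lra).
  replace (2 * (E + 3 + 2 * LL a beta) / GG a * INR m * / P)
    with (2 * ((E + 3 + 2 * LL a beta) * INR m) / GG a * / P) by (field; lra).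
  apply Rmult_le_compat_r; [left; apply Rinv_0_lt_compat; lra|].
  unfold Rdiv. apply Rmult_le_compat_r; [left; apply Rinv_0_lt_compat; lra|].
  nra.
Qed.
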